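(* Let $M$ be a graded quasi-primaryful $R$-module and $Y\subseteq qp.Spec_g(M)$. Then $Y$ is an irreducible closed subset of $qp.Spec_g(M)$ (quasi-Zariski topology) if and only if $Y=qp\text{-}V_M^g(Q)$ for some $Q\in qp.Spec_g(M)$. In particular, every irreducible closed subset of $qp.Spec_g(M)$ has a generic point.
   Context: $R=\bigoplus_{g\in G}R_g$ is a graded commutative ring with identity graded by a group $G$, $h(R)=\bigcup_g R_g$; $M$ is a graded $R$-module, $h(M)$ its homogeneous elements. $Gr(I)$ is the graded radical of a graded ideal $I$. $(K:_RM)=\{r: rM\subseteq K\}$. Graded prime submodule: proper graded $P$ with $rm\in P$ ($r\in h(R), m\in h(M)$) implying $m\in P$ or $r\in(P:_RM)$. $Gr_M(K)$: intersection of graded prime submodules containing $K$ ($M$ if none). Graded primeful property of $K$: for each graded prime $p\supseteq(K:_RM)$ there is a graded prime submodule $P\supseteq K$ with $(P:_RM)=p$. Graded quasi-primary submodule: proper graded $Q$ with $rm\in Q$ ($r\in h(R),m\in h(M)$) implying $r\in Gr((Q:_RM))$ or $m\in Gr_M(Q)$. $qp.Spec_g(M)$: graded quasi-primary submodules with the graded primeful property. $qp\text{-}V_M^g(K)=\{Q\in qp.Spec_g(M): Gr((Q:_RM))\supseteq Gr((K:_RM))\}$; the quasi-Zariski topology has closed sets exactly these. A graded quasi-primary ideal of $R$ is a proper graded ideal $q$ with $ab\in q$ ($a,b\in h(R)$) implying $a\in Gr(q)$ or $b\in Gr(q)$. $M$ is graded quasi-primaryful if $M=0$, or $M\ne 0$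 and for every graded quasi-primary ideal $q\supseteq\mathrm{Ann}(M)$ of $R$ there is $Q\in qp.Spec_g(M)$ with $Gr((Q:_RM))=Gr(q)$. A subset $A$ of a topological space is irreducible if whenever $A\subseteq A_1\cup A_2$ with $A_1,A_2$ closed, then $A\subseteq A_1$ or $A\subseteq A_2$. A generic point of a closed set $Y$ is $y\in Y$ with $Y=cl(\{y\})$. *)

(* Defs.v *)
From mathcomp Require Import all_boot all_algebra.
Set Implicit Arguments. Unset Strict Implicit. Unset Printing Implicit Defensive.
Import GRing.Theory.
Local Open Scope ring_scope.

(* An arbitrary (not necessarily abelian, possibly infinite) group structure
   on a carrier G, given by its operations and axioms. *)
Record group_law (G : Type) := GroupLaw {
  gmul : G -> G -> G;
  gunit : G;
  ginv : G -> G;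
  gmulA : forall x y z, gmul x (gmul y z) = gmul (gmul x y) z;
  gmul1 : forall x, gmul gunit x = x;
  gmulV : forall x, gmul (ginv x) x = gunit }.

Definition incl (T : Type) (A B : T -> Prop) := forall x, A x -> B x.
Definition seteq (T : Type) (A B : T -> Prop) := forall x, A x <-> B x.

Section Graded.
Variable G : Type.

Definition decomposes (T : zmodType) (Tg : G -> T -> Prop) (P : T -> Prop) (x : T) :=
  exists (n : nat) (gs : 'I_n -> G) (ys : 'I_n -> T),
    (forall i, Tg (gs i) (ys i) /\ P (ys i)) /\ x = \sum_(i < n) ys i.

(* the sum of the Tg's is direct: T_g meets the sum of the other T_h in 0 *)
Definition independent (T : zmodType) (Tg : G -> T -> Prop) :=
  forall (g : G) (x : T) (n : nat) (gs : 'I_n -> G) (ys : 'I_n -> T),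
    Tg g x -> (forall i, gs i <> g /\ Tg (gs i) (ys i)) ->
    x = \sum_(i < n) ys i -> x = 0.

Definition zmod_closed_P (T : zmodType) (A : T -> Prop) :=
  A 0 /\ forall x y, A x -> A y -> A (x - y).

Variable gl : group_law G.
Variable R : comPzRingType.
Variable Rg : G -> R -> Prop.

Definition graded_ring :=
  [/\ forall g, zmod_closed_P (Rg g),
      forall g h a b, Rg g a -> Rg h b -> Rg (gmul gl g h) (a * b),
      forall x : R, decomposes Rg (fun _ => True) x
    & independent Rg].

Variable M : lmodType R.
Variable Mg : G -> M -> Prop.

Definition graded_module :=
  [/\ forall g, zmod_closed_P (Mg g),
      forall g h (r : R) (m : M), Rg g r -> Mg h m -> Mg (gmul gl g h) (r *: m),
      forall x : M, decomposes Mg (fun _ => True) x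
    & independent Mg].

Definition hR (r : R) := exists g, Rg g r.
Definition hM (m : M) := exists g, Mg g m.

Definition is_ideal (I : R -> Prop) :=
  [/\ I 0, forall x y, I x -> I y -> I (x + y) & forall r x, I x -> I (r * x)].
Definition graded_ideal (I : R -> Prop) :=
  is_ideal I /\ forall x, I x -> decomposes Rg I x.
Definition proper_ideal (I : R -> Prop) := exists r, ~ I r.

Definition is_submodule (N : M -> Prop) :=
  [/\ N 0, forall x y, N x -> N y -> N (x + y) & forall (r : R) m, N m -> N (r *: m)].
Definition graded_submodule (N : M -> Prop) :=
  is_submodule N /\ forall m, N m -> decomposes Mg N m.
Definition proper_sub (N : M -> Prop) := exists m, ~ N m.

Definition colon (N : M -> Prop) : R -> Prop := fun r => forall m, N (r *: m).

(* graded radical: x = sum of homogeneous components, each having a power in I *)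
Definition Gr (I : R -> Prop) : R -> Prop := fun x =>
  exists (n : nat) (gs : 'I_n -> G) (ys : 'I_n -> R),
    (forall i, Rg (gs i) (ys i) /\ exists k, I (ys i ^+ k)) /\ x = \sum_(i < n) ys i.

Definition graded_prime_ideal (p : R -> Prop) :=
  [/\ graded_ideal p, proper_ideal p &
      forall a b, hR a -> hR b -> p (a * b) -> p a \/ p b].

Definition graded_prime_sub (P : M -> Prop) :=
  [/\ graded_submodule P, proper_sub P &
      forall r m, hR r -> hM m -> P (r *: m) -> P m \/ colon P r].

(* Gr_M(K): intersection of graded prime submodules containing K (M if none) *)
Definition GrM (K : M -> Prop) : M -> Prop := fun m =>
  forall P, graded_prime_sub P -> incl K P -> P m.

Definition primeful (K : M -> Prop) :=
  forall p, graded_prime_ideal p -> incl (colon K) p ->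
    exists P, [/\ graded_prime_sub P, incl K P & seteq (colon P) p].

Definition quasi_primary_sub (Q : M -> Prop) :=
  [/\ graded_submodule Q, proper_sub Q &
      forall r m, hR r -> hM m -> Q (r *: m) -> Gr (colon Q) r \/ GrM Q m].

Definition qpSpec (Q : M -> Prop) := quasi_primary_sub Q /\ primeful Q.

Definition qpV (K : M -> Prop) (Q : M -> Prop) :=
  qpSpec Q /\ incl (Gr (colon K)) (Gr (colon Q)).

Definition qp_closed (Y : (M -> Prop) -> Prop) :=
  exists K, graded_submodule K /\ seteq Y (qpV K).

Definition qp_irreducible (Y : (M -> Prop) -> Prop) :=
  (exists Q, Y Q) /\
  forall A1 A2, qp_closed A1 -> qp_closed A2 ->
    (forall Q, Y Q -> A1 Q \/ A2 Q) -> incl Y A1 \/ incl Y A2.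

Definition qp_closure (A : (M -> Prop) -> Prop) : (M -> Prop) -> Prop :=
  fun Q => forall C, qp_closed C -> incl A C -> C Q.

Definition generic_point (Y : (M -> Prop) -> Prop) (Q : M -> Prop) :=
  Y Q /\ seteq Y (qp_closure (fun P => P = Q)).

Definition quasi_primary_ideal (q : R -> Prop) :=
  [/\ graded_ideal q, proper_ideal q &
      forall a b, hR a -> hR b -> q (a * b) -> Gr q a \/ Gr q b].

Definition Ann : R -> Prop := colon (fun m => m = 0).

Definition quasi_primaryful :=
  (forall m : M, m = 0) \/
  ((exists m : M, m <> 0) /\
   forall q, quasi_primary_ideal q -> incl Ann q ->
     exists Q, qpSpec Q /\ seteq (Gr (colon Q)) (Gr q)).

End Graded.

(* Main.v *)
Require Import Defs.
From mathcomp Require Import all_boot all_algebra.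
From Stdlib Require Import Classical Lia.
From mathcomp Require Import zify.
From mathcomp Require boolp classical_sets.
Set Implicit Arguments. Unset Strict Implicit. Unset Printing Implicit Defensive.
Import GRing.Theory.
Local Open Scope ring_scope.

Section GenSum.
Variables (G : Type) (T : zmodType).

Inductive SumH (Q : G -> T -> Prop) : nat -> T -> Prop :=
 | SH0 : SumH Q 0 0
 | SHc g y n x : Q g y -> SumH Q n x -> SumH Q n.+1 (y + x).

Lemma SumH_mono (Q Q' : G -> T -> Prop) n x :
  (forall g y, Q g y -> Q' g y) -> SumH Q n x -> SumH Q' n x.
Proof. move=> H; elim=> [|g y m z Qy _ IH]; [exact: SH0| exact: SHc (H _ _ Qy) IH]. Qed.

Lemma SumH_add Q n x m y : SumH Q n x -> SumH Q m y -> SumH Q (n + m) (x + y).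
Proof.
move=> Hx Hy; elim: Hx => [|g z k w Qz _ IH]; first by rewrite add0r add0n.
by rewrite -addrA addSn; apply: SHc Qz IH.
Qed.

Lemma SumH_closed Q (A : T -> Prop) n x :
  A 0 -> (forall a b, A a -> A b -> A (a + b)) ->
  (forall g y, Q g y -> A y) -> SumH Q n x -> A x.
Proof. move=> A0 AD AQ; elim=> // g y k z Qy _ IH; exact: AD (AQ _ _ Qy) IH. Qed.

Lemma SumH_split Q n x g : SumH Q n x -> exists k m u v,
  [/\ SumH (fun h y => Q h y /\ h = g) k u, SumH (fun h y => Q h y /\ h <> g) m v,
      x = u + v & (k + m = n)%N].
Proof.
elim=> [|h y j z Qy _ [k [m [u [v [Hu Hv -> Hkm]]]]]].
  by exists 0%N, 0%N, 0, 0; split; try constructor; rewrite ?addr0.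
case: (classic (h = g)) => hg.
  exists k.+1, m, (y + u), v; split.
  - by apply: (@SHc _ h) Hu.
  - by [].
  - by rewrite addrA.
  - by rewrite addSn Hkm.
exists k, m.+1, u, (y + v); split.
- by [].
- by apply: (@SHc _ h) Hv.
- by rewrite addrCA.
- by rewrite addnS Hkm.
Qed.

Lemma SumH_opp Q n x : (forall g y, Q g y -> Q g (- y)) -> SumH Q n x -> SumH Q n (- x).
Proof.
move=> HQ; elim=> [|g y k z Qy _ IH]; first by rewrite oppr0; constructor.
by rewrite opprD; apply: SHc (HQ _ _ Qy) IH.
Qed.

Lemma fam_SumH (Q : G -> T -> Prop) x :
  (exists (n : nat) (gs : 'I_n -> G) (ys : 'I_n -> T),
    (forall i, Q (gs i) (ys i)) /\ x = \sum_(i < n) ys i) <-> exists n, SumH Q n x.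
Proof.
split.
  case=> n [gs [ys [Hi ->]]]; exists n.
  elim: n gs ys Hi => [|n IH] gs ys Hi; first by rewrite big_ord0; constructor.
  rewrite big_ord_recl; apply: (SHc (g := gs ord0)); first exact: Hi.
  exact: (IH (fun i => gs (lift ord0 i)) (fun i => ys (lift ord0 i))).
case=> n H; elim: H => [|g y k z Qy _ [n0 [gs [ys [Hi ->]]]]].
  have f0 : 'I_0 -> G by case.
  by exists 0%N, f0, (fun _ => 0); split; [case|rewrite big_ord0].
exists n0.+1, (fun i => if unlift ord0 i is Some j then gs j else g),
  (fun i => if unlift ord0 i is Some j then ys j else y); split.
  move=> i; case: unliftP => [j _|_]; [exact: Hi | exact: Qy].
by rewrite big_ord_recl unlift_none; congr (_ + _); apply: eq_bigr => i _; rewrite liftK.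
Qed.

Lemma dec_SumH (Tg : G -> T -> Prop) (P : T -> Prop) x :
  decomposes Tg P x <-> exists n, SumH (fun g y => Tg g y /\ P y) n x.
Proof. exact: fam_SumH. Qed.

Lemma zc_opp (A : T -> Prop) a : zmod_closed_P A -> A a -> A (- a).
Proof. by case=> A0 AB Aa; rewrite -sub0r; apply: AB. Qed.

Lemma zc_add (A : T -> Prop) a b : zmod_closed_P A -> A a -> A b -> A (a + b).
Proof. by move=> Hz Aa Ab; rewrite -[b]opprK; apply: Hz.2 => //; apply: zc_opp. Qed.

Lemma zc_sum (Tg : G -> T -> Prop) g Q n x : zmod_closed_P (Tg g) ->
  SumH (fun h y => Q h y /\ h = g) n x -> (forall h y, Q h y -> Tg h y) -> Tg g x.
Proof.
move=> Hz H HQ; apply: (SumH_closed _ _ _ H); first exact: Hz.1.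
  by move=> a b; apply: zc_add.
by move=> h y [/HQ Hy <-].
Qed.

Lemma indep_SumH (Tg : G -> T -> Prop) g x n v : independent Tg -> Tg g x ->
  SumH (fun h y => Tg h y /\ h <> g) n v -> x = v -> x = 0.
Proof.
move=> Hi Hx Hv xv.
have [m [gs [ys [Hys E]]]] := (proj2 (fam_SumH _ v)) (ex_intro _ n Hv).
apply: (Hi g x m gs ys Hx) => [i|]; last by rewrite xv.
by case: (Hys i).
Qed.

Lemma uniq_comp (Tg : G -> T -> Prop) (N : T -> Prop) g x y m n :
  (forall h, zmod_closed_P (Tg h)) -> independent Tg ->
  N 0 -> (forall a b, N a -> N b -> N (a + b)) ->
  Tg g x -> SumH (fun h z => Tg h z /\ h <> g) m y ->
  SumH (fun h z => Tg h z /\ N z) n (x + y) -> N x.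
Proof.
move=> Hz Hi N0 ND Hx Hy Hxy.
have [k [l [u [v [Hu Hv E Hkl]]]]] := SumH_split g Hxy.
have Tu : Tg g u by apply: zc_sum Hu _ => // h z [].
have Nu : N u.
  by apply: (SumH_closed _ _ _ Hu) => // h z [[_ ?] _].
have Hvy : SumH (fun h z => Tg h z /\ h <> g) (l + m) (v - y).
  apply: SumH_add.
    by apply: SumH_mono Hv => h z [[? _] ?].
  by apply: SumH_opp Hy => h z [Hh hg]; split => //; apply: zc_opp.
have : x - u = 0.
  apply: (indep_SumH Hi _ Hvy); first by apply: (Hz g).2.
  by apply/eqP; rewrite subr_eq; apply/eqP; rewrite (addrC _ u) addrA -E addrK.
by move/eqP; rewrite subr_eq0 => /eqP ->.
Qed.

Lemma graded_crit (Tg : G -> T -> Prop) (I : T -> Prop) :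
  (forall h, zmod_closed_P (Tg h)) -> I 0 -> (forall a b, I a -> I b -> I (a - b)) ->
  (forall g u v m, Tg g u -> SumH (fun h z => Tg h z /\ h <> g) m v -> I (u + v) -> I u) ->
  forall n x, SumH (fun h y => Tg h y /\ True) n x -> I x ->
  exists m, SumH (fun h y => Tg h y /\ I y) m x.
Proof.
move=> Hz I0 IB CP n; elim: n {-2}n (leqnn n) => [|N IH] n.
  rewrite leqn0 => /eqP -> x H; inversion H; subst => _; exists 0%N; constructor.
move=> nN x H Ix; case: H nN Ix => [|g y k z [Ty _] Hz'] nN Ix.
  by exists 0%N; constructor.
have [k1 [k2 [u [v [Hu Hv E Hk]]]]] := SumH_split g Hz'.
have Tyu : Tg g (y + u).
  by apply: zc_add (Hz g) Ty _; apply: zc_sum Hu _ => // h w [].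
have Hv' : SumH (fun h z => Tg h z /\ h <> g) k2 v by apply: SumH_mono Hv => h w [[? _] ?].
have Ex : y + z = (y + u) + v by rewrite E addrA.
have Iyu : I (y + u) by apply: (CP g _ _ _ Tyu Hv'); rewrite -Ex.
have Iv : I v by have := IB _ _ Ix Iyu; rewrite Ex addrC addKr.
have [m Hm] : exists m, SumH (fun h y => Tg h y /\ I y) m v.
  apply: (IH k2) => //; last by apply: SumH_mono Hv => h w [[? _] _].
  by rewrite -ltnS (leq_trans _ nN) // ltnS -Hk leq_addl.
by exists m.+1; rewrite Ex; apply: (@SHc _ g) Hm.
Qed.
End GenSum.

Section GroupFacts.
Variables (G : Type) (gl : group_law G).
Lemma gmulV_r x : gmul gl x (ginv gl x) = gunit gl.
Proof.
set y := ginv gl x; set z := gmul gl x y.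
have zz : gmul gl z z = z.
  by rewrite /z -gmulA (gmulA gl y) gmulV gmul1.
by rewrite -[z](gmul1 gl) -(gmulV gl z) -gmulA zz.
Qed.
Lemma gmul1_r x : gmul gl x (gunit gl) = x.
Proof. by rewrite -(gmulV gl x) gmulA gmulV_r gmul1. Qed.
Lemma gcancel_r g g' h : gmul gl g h = gmul gl g' h -> g = g'.
Proof.
move=> E; rewrite -[g]gmul1_r -[g']gmul1_r -(gmulV_r h) !gmulA E //.
Qed.
End GroupFacts.

Section Graded.
Variables (G : Type) (gl : group_law G) (R : comPzRingType) (Rg : G -> R -> Prop)
  (M : lmodType R) (Mg : G -> M -> Prop).
Hypothesis HR : graded_ring gl Rg.
Hypothesis HM : graded_module gl Rg Mg.

Definition rad (I : R -> Prop) y := exists k, I (y ^+ k).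

Lemma HRz g : zmod_closed_P (Rg g). Proof. by case: HR. Qed.
Lemma HRm g h a b : Rg g a -> Rg h b -> Rg (gmul gl g h) (a * b). Proof. by case: HR => _ H _ _; apply: H. Qed.
Lemma HRd x : exists n, SumH (fun g y => Rg g y /\ True) n x.
Proof. by case: HR => _ _ H _; apply/dec_SumH. Qed.
Lemma HRi : independent Rg. Proof. by case: HR. Qed.
Lemma HMz g : zmod_closed_P (Mg g). Proof. by case: HM. Qed.
Lemma HMm g h r m : Rg g r -> Mg h m -> Mg (gmul gl g h) (r *: m). Proof. by case: HM => _ H _ _; apply: H. Qed.
Lemma HMd x : exists n, SumH (fun g y => Mg g y /\ True) n x.
Proof. by case: HM => _ _ H _; apply/dec_SumH. Qed.
Lemma HMi : independent Mg. Proof. by case: HM. Qed.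

Section Ideal.
Variable I : R -> Prop.
Hypothesis HI : is_ideal I.
Lemma I0 : I 0. Proof. by case: HI. Qed.
Lemma ID a b : I a -> I b -> I (a + b). Proof. by case: HI => _ H _; apply: H. Qed.
Lemma IMl r a : I a -> I (r * a). Proof. by case: HI => _ _ H; apply: H. Qed.
Lemma IMr r a : I a -> I (a * r). Proof. by rewrite mulrC; apply: IMl. Qed.
Lemma IN a : I a -> I (- a). Proof. by move=> Ia; rewrite -mulN1r; apply: IMl. Qed.
Lemma IB a b : I a -> I b -> I (a - b). Proof. by move=> Ia Ib; apply: ID => //; apply: IN. Qed.
Lemma Isum n (F : 'I_n -> R) : (forall i, I (F i)) -> I (\sum_(i < n) F i).
Proof. move=> H; apply: big_ind => //; [exact: I0 | exact: ID]. Qed.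
Lemma Inat a k : I a -> I (a *+ k).
Proof. by move=> Ia; rewrite -mulr_natl; apply: IMl. Qed.

Lemma radD a b : rad I a -> rad I b -> rad I (a + b).
Proof.
case=> ka Ha [kb Hb]; exists (ka + kb)%N; rewrite exprDn; apply: Isum => i.
apply: Inat; case: (ltnP i kb) => hi.
  have -> : (ka + kb - i = (ka + kb - i - ka) + ka)%N by lia.
  by rewrite exprD -mulrA; apply: IMl; rewrite mulrC; apply: IMl.
by rewrite -(subnK hi) exprD mulrA; apply: IMl.
Qed.
Lemma rad0 : rad I 0. Proof. by exists 1%N; rewrite expr1; exact: I0. Qed.

Lemma Gr_SumH x : Gr Rg I x <-> exists n, SumH (fun g y => Rg g y /\ rad I y) n x.
Proof. exact: (dec_SumH Rg (rad I) x). Qed.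

Lemma Gr_rad x : Gr Rg I x -> rad I x.
Proof.
case/Gr_SumH=> n H; apply: (SumH_closed _ _ _ H); [exact: rad0 | exact: radD|].
by move=> g y [].
Qed.

Lemma hom_Gr g y : Rg g y -> rad I y -> Gr Rg I y.
Proof. by move=> Hy Ry; apply/Gr_SumH; exists 1%N; rewrite -[y]addr0; apply: (SHc (g := g)) (SH0 _). Qed.
End Ideal.

Lemma SumH_mul_hom (I : R -> Prop) n r g y : is_ideal I ->
  SumH (fun g y => Rg g y /\ True) n r -> Rg g y -> rad I y ->
  exists m, SumH (fun g y => Rg g y /\ rad I y) m (r * y).
Proof.
move=> HI H Ry [k Hk]; elim: H => [|h z j w [Rz _] _ [m IH]].
  by exists 0%N; rewrite mul0r; constructor.
exists m.+1; rewrite mulrDl; apply: (SHc (g := gmul gl h g)) IH; split.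
  exact: HRm. by exists k; rewrite exprMn; apply: IMl.
Qed.

Lemma Gr_ideal I : is_ideal I -> is_ideal (Gr Rg I).
Proof.
move=> HI; split.
- by apply/Gr_SumH; exists 0%N; constructor.
- move=> x y /Gr_SumH [n Hx] /Gr_SumH [m Hy]; apply/Gr_SumH; exists (n + m)%N.
  exact: SumH_add.
- move=> r x /Gr_SumH [n Hx]; apply/Gr_SumH; have [k Hr] := HRd r.
  elim: Hx => [|g y j z [Ry Ky] _ [m IH]].
    by exists 0%N; rewrite mulr0; constructor.
  have [m' H'] := SumH_mul_hom HI Hr Ry Ky.
  by exists (m' + m)%N; rewrite mulrDr; apply: SumH_add.
Qed.

Lemma colon_ideal (P : M -> Prop) : is_submodule P -> is_ideal (colon P).
Proof.
case=> P0 PD PZ; split.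
- by move=> m; rewrite scale0r.
- by move=> x y Hx Hy m; rewrite scalerDl; apply: PD.
- by move=> r x Hx m; rewrite -scalerA; apply: PZ.
Qed.

Lemma hR_expS a k : hR Rg a -> hR Rg (a ^+ k.+1).
Proof.
case=> g Ha; elim: k => [|k [h IH]]; first by exists g; rewrite expr1.
by exists (gmul gl h g); rewrite exprSr; apply: HRm.
Qed.

Lemma rad_mono (I J : R -> Prop) : incl I J -> incl (rad I) (rad J).
Proof. by move=> H x [k Hk]; exists k; apply: H. Qed.

Lemma Gr_mono (I J : R -> Prop) : incl I J -> incl (Gr Rg I) (Gr Rg J).
Proof.
move=> H x /Gr_SumH [n Hx]; apply/Gr_SumH; exists n; apply: SumH_mono Hx.
by move=> g y [? ?]; split => //; apply: rad_mono H _ _.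
Qed.

Lemma SumH_scale n v g h w : SumH (fun g' z => Rg g' z /\ g' <> g) n v -> Mg h w ->
  SumH (fun h' z => Mg h' z /\ h' <> gmul gl g h) n (v *: w).
Proof.
move=> H Hw; elim: H => [|g1 z j x [Rz ng] _ IH]; first by rewrite scale0r; constructor.
rewrite scalerDl; apply: (SHc (g := gmul gl g1 h)) IH; split; first exact: HMm.
by move=> E; apply: ng; exact: gcancel_r E.
Qed.

Lemma sub_graded (P : M -> Prop) m : graded_submodule Mg P -> P m ->
  exists n, SumH (fun g y => Mg g y /\ P y) n m.
Proof. by case=> _ H /H /dec_SumH. Qed.

Lemma colon_graded (P : M -> Prop) : graded_submodule Mg P -> graded_ideal Rg (colon P).
Proof.
move=> HP; have Hs := HP.1; have HI := colon_ideal Hs.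
split => // x Hx; apply/dec_SumH; have [n Hn] := HRd x.
apply: (graded_crit HRz _ _ _ Hn Hx); [exact: I0 | exact: IB |].
move=> g u v k Ru Hv Huv m0.
have [l Hl] := HMd m0; case: Hs => P0 PD PZ.
apply: (SumH_closed (A := fun w => P (u *: w)) _ _ _ Hl).
- by rewrite scaler0.
- by move=> a b Pa Pb; rewrite scalerDr; apply: PD.
move=> h w [Mw _].
have [j Hj] := sub_graded HP (Huv w); rewrite scalerDl in Hj.
apply: (uniq_comp HMz HMi P0 PD _ (SumH_scale Hv Mw) Hj).
exact: HMm.
Qed.

Section Zorn.
Variables (J0 : R -> Prop) (b : R).
Hypothesis HJ0 : graded_ideal Rg J0.
Hypothesis Hb : forall n, ~ J0 (b ^+ n).

Definition Good (I : R -> Prop) := [/\ graded_ideal Rg I, incl J0 I & forall n, ~ I (b ^+ n)].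

Lemma Good_incl I : Good I -> incl J0 I. Proof. by case. Qed.
Lemma Good_avoid I n : Good I -> ~ I (b ^+ n). Proof. by case. Qed.

Lemma graded_mono (I J : R -> Prop) x : incl I J -> decomposes Rg I x -> decomposes Rg J x.
Proof.
move=> H /dec_SumH [n Hn]; apply/dec_SumH; exists n; apply: SumH_mono Hn.
by move=> g y [? ?]; split => //; apply: H.
Qed.

Lemma ext_good (p : R -> Prop) x : Good p -> hR Rg x ->
  graded_ideal Rg (fun z => exists s r, p s /\ z = s + r * x).
Proof.
case=> [[Hp Hpd] _ _] [g Hx]; set px := fun z => _.
have ppx : incl p px by move=> z pz; exists z, 0; rewrite mul0r addr0.
split.
  split.
  - by exists 0, 0; split; [exact: I0 | rewrite mul0r addr0].
  - move=> y z [s [r [ps ->]]] [s' [r' [ps' ->]]]; exists (s + s'), (r + r'); split.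
      exact: ID. by rewrite mulrDl addrACA.
  - move=> r0 z [s [r [ps ->]]]; exists (r0 * s), (r0 * r); split.
      exact: IMl. by rewrite mulrDr mulrA.
move=> z [s [r [ps ->]]]; apply/dec_SumH.
have [n1 H1] : exists n, SumH (fun g y => Rg g y /\ px y) n s.
  by apply/dec_SumH; apply: graded_mono ppx _; apply: Hpd.
have [n2 H2] : exists n, SumH (fun g y => Rg g y /\ px y) n (r * x).
  have [k Hr] := HRd r; exists k; elim: Hr => [|h y j w [Ry _] _ IH].
    by rewrite mul0r; constructor.
  rewrite mulrDl; apply: (SHc (g := gmul gl h g)) IH; split; first exact: HRm.
  by exists 0, y; split; [exact: I0 | rewrite add0r].
by exists (n1 + n2)%N; apply: SumH_add.
Qed.

Lemma exists_prime : exists p, [/\ graded_prime_ideal Rg p, incl J0 p & forall n, ~ p (b ^+ n)].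
Proof.
have G0 : Good J0 by split.
pose T := {I : R -> Prop | Good I}.
pose Rel := fun s t : T => boolp.asbool (incl (sval s) (sval t)).
have [|||t tmax] := @classical_sets.ZL_preorder T (exist _ J0 G0) Rel.
- by move=> s; apply/boolp.asboolP => x.
- move=> r s t /boolp.asboolP H1 /boolp.asboolP H2; apply/boolp.asboolP => x /H1; exact: H2.
- move=> A Atot.
  pose U := fun x => J0 x \/ exists s, A s /\ sval s x.
  have two : forall x y, U x -> U y -> exists J, [/\ Good J, J x, J y & incl J U].
    have sU : forall s, A s -> incl (sval s) U by move=> s As z sz; right; exists s.
    move=> x y [x0|[s [As sx]]] [y0|[s' [As' sy]]].
    + by exists J0; split => // z; left.
    + exists (sval s'); split; [exact: (svalP s') | exact: (Good_incl (svalP s') x0) | done | exact: sU].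
    + exists (sval s); split; [exact: (svalP s) | done | exact: (Good_incl (svalP s) y0) | exact: sU].
    + case: (Atot _ _ As As') => /boolp.asboolP H.
        by exists (sval s'); split; [exact: (svalP s') | exact: (H _ sx) | done | exact: sU].
      by exists (sval s); split; [exact: (svalP s) | done | exact: (H _ sy) | exact: sU].
  have GU : Good U.
    split.
    + split.
        split.
        * by left; case: HJ0 => -[].
        * move=> x y Ux Uy; have [J [[[HJ _] _ _] Jx Jy JU]] := two x y Ux Uy.
          by apply: JU; apply: ID.
        * move=> r x Ux; have [J [[[HJ _] _ _] Jx _ JU]] := two x x Ux Ux.
          by apply: JU; apply: IMl.
      move=> x Ux; have [J [[[HJ HJd] _ _] Jx _ JU]] := two x x Ux Ux.
      by apply: graded_mono JU _; apply: HJd.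
    + by move=> x; left.
    + move=> n [|[s [As sb]]]; first exact: Hb.
      exact: Good_avoid (svalP s) sb.
  exists (exist _ U GU) => s As; apply/boolp.asboolP => x sx /=; right; exists s; split => //.
case: t tmax => p Gp /= tmax; exists p.
case: (Gp) => [[Hp Hpd] Ip Pb]; split => //; split => //.
  by exists (b ^+ 0); apply: Pb.
move=> a c ha hc pac; apply: NNPP => Hn.
have [na nc] : ~ p a /\ ~ p c by split => H; apply: Hn; [left|right].
have stuck : forall x, hR Rg x -> ~ p x -> exists i s r, p s /\ b ^+ i = s + r * x.
  move=> x hx npx; apply: NNPP => Hno.
  have Gx : Good (fun z => exists s r, p s /\ z = s + r * x).
    split.
    - exact: ext_good.
    - by move=> z /Ip pz; exists z, 0; rewrite mul0r addr0.
    - by move=> n [s [r [ps E]]]; apply: Hno; exists n, s, r.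
  have := tmax (exist _ _ Gx).
  have H1 : Rel (exist _ p Gp) (exist _ _ Gx).
    by apply/boolp.asboolP => z pz /=; exists z, 0; rewrite mul0r addr0.
  move=> /(_ H1) /boolp.asboolP /= H2; apply: npx.
  apply: H2; exists 0, 1; split; [exact: I0 Hp | by rewrite mul1r add0r].
have [i [s [r [ps Ei]]]] := stuck a ha na.
have [j [s' [r' [ps' Ej]]]] := stuck c hc nc.
apply: (Pb (i + j)%N); rewrite exprD Ei Ej mulrDl mulrDr.
apply: (ID Hp).
  by apply: (ID Hp); apply: (IMr Hp).
rewrite mulrDr; apply: (ID Hp); first by apply: (IMl Hp).
by rewrite mulrACA; apply: (IMl Hp).
Qed.
End Zorn.

Lemma rad_pow (I : R -> Prop) x k : rad I (x ^+ k) -> rad I x.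
Proof. by case=> j Hj; exists (k * j)%N; rewrite exprM. Qed.

Lemma Gr_prime (P : M -> Prop) : qpSpec Rg Mg P -> forall a c, hR Rg a -> hR Rg c ->
  Gr Rg (colon P) (a * c) -> Gr Rg (colon P) a \/ Gr Rg (colon P) c.
Proof.
case=> [[HPg HPp HPq] HPf] a c [ga Ha] [gc Hc] Hac.
have Hs := HPg.1; have HI := colon_ideal Hs.
have [k Hk] := Gr_rad HI Hac.
have HK : colon P ((a * c) ^+ k.+1) by rewrite exprSr; apply: (IMr HI).
case: (classic (rad (colon P) a)) => ra; first by left; apply: hom_Gr Ha ra.
case: (classic (rad (colon P) c)) => rc; first by right; apply: hom_Gr Hc rc.
exfalso.
have GM : forall h m, Mg h m -> GrM Rg Mg P (c ^+ k.+1 *: m).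
  move=> h m Hm.
  have hc : hR Rg (c ^+ k.+1) by apply: hR_expS; exists gc.
  have h1 : hR Rg (a ^+ k.+1) by apply: hR_expS; exists ga.
  have h2 : hM Mg (c ^+ k.+1 *: m).
    by case: hc => g' Hg'; exists (gmul gl g' h); apply: HMm.
  have h3 : P (a ^+ k.+1 *: (c ^+ k.+1 *: m)).
    by rewrite scalerA -exprMn; apply: HK.
  case: (HPq _ _ h1 h2 h3) => //.
  by move/(Gr_rad HI)/rad_pow.
have [p [[Hpg Hpp Hpq] Ip Pc]] := exists_prime (colon_graded HPg) (b := c)
  (fun n Hn => rc (ex_intro _ n Hn)).
have [P' [HP' PP' EP']] := HPf p (And3 Hpg Hpp Hpq) Ip.
apply: (Pc k.+1); apply/EP' => m0.
have [l Hl] := HMd m0.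
case: (HP') => [[[P0 PD PZ] _] _ _].
apply: (SumH_closed (A := fun w => P' (c ^+ k.+1 *: w)) _ _ _ Hl).
- by rewrite scaler0.
- by move=> x y Px Py; rewrite scalerDr; apply: PD.
move=> h w [Hw _]; exact: (GM h w Hw P' HP' PP').
Qed.

Lemma qp_sub (P : M -> Prop) : qpSpec Rg Mg P -> is_submodule P.
Proof. by case=> [[[]]]. Qed.
Lemma qp_gsub (P : M -> Prop) : qpSpec Rg Mg P -> graded_submodule Mg P.
Proof. by case=> [[]]. Qed.

Lemma Gr_Gr I : is_ideal I -> incl (Gr Rg (Gr Rg I)) (Gr Rg I).
Proof.
move=> HI x /Gr_SumH [n Hn]; apply/Gr_SumH; exists n; apply: SumH_mono Hn.
move=> g y [Ry [k Hk]]; split => //; apply: (rad_pow (k := k)).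
exact (@Gr_rad I HI _ Hk).
Qed.

Lemma colon_Gr (P : M -> Prop) : graded_submodule Mg P -> incl (colon P) (Gr Rg (colon P)).
Proof.
move=> HP x Hx; have [_ /(_ x Hx) /dec_SumH [n Hn]] := colon_graded HP.
apply/Gr_SumH; exists n; apply: SumH_mono Hn => g y [Ry Hy]; split => //.
by exists 1%N; rewrite expr1.
Qed.

Definition aM (a : R) := fun m : M => exists m', m = a *: m'.

Lemma aM_graded a : hR Rg a -> graded_submodule Mg (aM a).
Proof.
case=> g Ha; split.
  split.
  - by exists 0; rewrite scaler0.
  - by move=> x y [x' ->] [y' ->]; exists (x' + y'); rewrite scalerDr.
  - by move=> r x [x' ->]; exists (r *: x'); rewrite !scalerA mulrC.
move=> x [x' ->]; apply/dec_SumH; have [n Hn] := HMd x'; exists n.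
elim: Hn => [|h y j z [Hy _] _ IH]; first by rewrite scaler0; constructor.
rewrite scalerDr; apply: (SHc (g := gmul gl g h)) IH; split; first exact: HMm.
by exists y.
Qed.

Lemma aM_self a : hR Rg a -> Gr Rg (colon (aM a)) a.
Proof. by case=> g Ha; apply: (hom_Gr Ha); exists 1%N => m; exists m; rewrite expr1. Qed.

Lemma aM_rad (P : M -> Prop) a : is_submodule P -> rad (colon P) a ->
  incl (Gr Rg (colon (aM a))) (Gr Rg (colon P)).
Proof.
move=> HP [j Hj] x /Gr_SumH [n Hn]; apply/Gr_SumH; exists n; apply: SumH_mono Hn.
move=> g y [Ry [k Hk]]; split => //; exists (k * j)%N => m.
have step : forall (i : nat) (m1 : M), exists m', (y ^+ k) ^+ i *: m1 = a ^+ i *: m'.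
  elim=> [|i IH] m1; first by exists m1; rewrite !expr0.
  have [m2 E2] := Hk m1; have [m3 E3] := IH m2.
  by exists m3; rewrite exprSr -scalerA E2 scalerA mulrC -scalerA E3 scalerA -exprS.
by rewrite exprM; have [m' ->] := step j m; apply: Hj.
Qed.

Section Main.
Variables (Y : (M -> Prop) -> Prop) (K : M -> Prop).
Hypothesis HY : seteq Y (qpV Rg Mg K).
Hypothesis Hirr : qp_irreducible Rg Mg Y.

Definition J := fun r => forall P, Y P -> Gr Rg (colon P) r.

Lemma Y_qp P : Y P -> qpSpec Rg Mg P. Proof. by move/HY => []. Qed.

Lemma J_ideal : is_ideal J.
Proof.
have H : forall P, Y P -> is_ideal (Gr Rg (colon P)).
  by move=> P /Y_qp /qp_sub /colon_ideal /Gr_ideal.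
split.
- by move=> P /H HI; apply: I0.
- by move=> x y Jx Jy P YP; apply: (ID (H _ YP)); [apply: Jx | apply: Jy].
- by move=> r x Jx P YP; apply: (IMl (H _ YP)); apply: Jx.
Qed.

Lemma J_graded : graded_ideal Rg J.
Proof.
split; first exact: J_ideal.
move=> x Jx; apply/dec_SumH; have [n Hn] := HRd x.
apply: (graded_crit HRz _ _ _ Hn Jx); [exact: (I0 J_ideal) | exact: (IB J_ideal) |].
move=> g u v k Ru Hv Huv P YP.
have HI := colon_ideal (qp_sub (Y_qp YP)).
have [l Hl] := (Gr_SumH (colon P) (u + v)).1 (Huv P YP).
apply: (hom_Gr Ru).
exact: (uniq_comp HRz HRi (rad0 HI) (radD HI) Ru Hv Hl).
Qed.

Lemma J_sub_Gr : incl J (Gr Rg J).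
Proof.
move=> x Jx; have [_ /(_ x Jx) /dec_SumH [n Hn]] := J_graded.
apply/Gr_SumH; exists n; apply: SumH_mono Hn => g y [Ry Hy]; split => //.
by exists 1%N; rewrite expr1.
Qed.

Lemma GrJ_sub P : Y P -> incl (Gr Rg J) (Gr Rg (colon P)).
Proof.
move=> YP x Hx; have HI := colon_ideal (qp_sub (Y_qp YP)).
apply: (Gr_Gr HI); apply: (Gr_mono (I := J)) Hx => r Jr; exact: Jr.
Qed.

Lemma J_qp : quasi_primary_ideal Rg J.
Proof.
have [[P0 YP0] Hcov] := Hirr.
split.
- exact: J_graded.
- exists 1 => J1; have HI := colon_ideal (qp_sub (Y_qp YP0)).
  have [k Hk] := Gr_rad HI (J1 P0 YP0).
  have [[_ [m nm] _] _] := Y_qp YP0; apply: nm.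
  by have := Hk m; rewrite expr1n scale1r.
move=> a c ha hc Jac.
have cl : forall b, hR Rg b -> qp_closed Rg Mg (qpV Rg Mg (aM b)).
  by move=> b hb; exists (aM b); split => //; exact: aM_graded.
have inV : forall P b, Y P -> Gr Rg (colon P) b -> qpV Rg Mg (aM b) P.
  move=> P b YP Hb; have HQ := Y_qp YP; split => //.
  apply: aM_rad; first exact: qp_sub.
  exact (@Gr_rad _ (colon_ideal (qp_sub HQ)) _ Hb).
have fromV : forall b, hR Rg b -> incl Y (qpV Rg Mg (aM b)) -> Gr Rg J b.
  move=> b hb HYb; apply: J_sub_Gr => P YP.
  by have [_ H] := HYb P YP; apply: H; apply: aM_self.
have cov : forall P, Y P -> qpV Rg Mg (aM a) P \/ qpV Rg Mg (aM c) P.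
  move=> P YP; have [Ha|Hc] := Gr_prime (Y_qp YP) ha hc (Jac P YP).
    by left; apply: inV.
  by right; apply: inV.
case: (Hcov _ _ (cl a ha) (cl c hc) cov) => H; [left|right]; exact: fromV.
Qed.

Lemma J_Ann : incl (Ann M) J.
Proof.
move=> r Hr P YP; have HQ := Y_qp YP; apply: colon_Gr; first exact: qp_gsub.
case: (qp_sub HQ) => P0 _ _ m; by rewrite (Hr m).
Qed.

Lemma main_fwd : quasi_primaryful Rg Mg -> exists Q, qpSpec Rg Mg Q /\ seteq Y (qpV Rg Mg Q).
Proof.
have [[P0 YP0] _] := Hirr.
case=> [triv|[_ Hq]].
  by exfalso; have [[_ [m nm] _] _] := Y_qp YP0; apply: nm; rewrite (triv m); case: (qp_sub (Y_qp YP0)).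
have [Q [HQ EQ]] := Hq J J_qp J_Ann.
exists Q; split => // P; split.
- move=> YP; split; first exact: Y_qp.
  by move=> x /EQ; apply: GrJ_sub.
- case=> HP HQP; apply/HY; split => // x Hx.
  apply: HQP; apply/EQ; apply: J_sub_Gr => P' YP'.
  by have [_ H] := (HY P').1 YP'; apply: H.
Qed.
End Main.
End Graded.

Theorem theorem4p9 (G : Type) (gl : group_law G) (R : comPzRingType)
  (Rg : G -> R -> Prop) (M : lmodType R) (Mg : G -> M -> Prop) :
  graded_ring gl Rg -> graded_module gl Rg Mg -> quasi_primaryful Rg Mg ->
  (forall Y : (M -> Prop) -> Prop, incl Y (qpSpec Rg Mg) ->
     (qp_irreducible Rg Mg Y /\ qp_closed Rg Mg Y <->
      exists Q, qpSpec Rg Mg Q /\ seteq Y (qpV Rg Mg Q))) /\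
  (forall Y : (M -> Prop) -> Prop, incl Y (qpSpec Rg Mg) ->
     qp_irreducible Rg Mg Y -> qp_closed Rg Mg Y ->
     exists Q, generic_point Rg Mg Y Q).
Proof.
move=> HR HM Hqf; split.
- move=> Y HYsub; split.
  + case=> Hirr [K [HK HYK]]; exact: (main_fwd HR HM HYK Hirr Hqf).
  + case=> Q [HQ EY]; split.
    * have YQ : Y Q by apply/EY; split => // x.
      split; first by exists Q.
      move=> A1 A2 [K1 [HK1 E1]] [K2 [HK2 E2]] cov.
      have trans : forall (A : (M -> Prop) -> Prop) K', seteq A (qpV Rg Mg K') -> A Q -> incl Y A.
        move=> A K' EA AQ P YP; apply/EA; have [HP HPQ] := (EY P).1 YP.
        split => // x Hx; apply: HPQ; have [_ H] := (EA Q).1 AQ; exact: H.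
      by case: (cov Q YQ) => H; [left; apply: trans E1 H | right; apply: trans E2 H].
    * by exists Q; split => //; exact: qp_gsub HQ.
- move=> Y HYsub Hirr [K [HK HYK]].
  have [Q [HQ EY]] := main_fwd HR HM HYK Hirr Hqf.
  have YQ : Y Q by apply/EY; split => // x.
  exists Q; split => // P; split.
  + move=> YP C [K' [HK' EC]] CQ; have CQ' := CQ Q erefl.
    apply/EC; have [HP HPQ] := (EY P).1 YP; split => // x Hx.
    by apply: HPQ; have [_ H] := (EC Q).1 CQ'; exact: H.
  + move=> HC; apply: HC; first by exists K.
    by move=> P' ->.
Qed.
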